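(* Let $1/q$ be a prime power, $\Bbbk=\mathbb{F}_{1/q}$, $n=4$, $\alpha=\beta=(1,1,1,1)$. Let $M$ and $M'$ be the $4\times4$ permutation matrices of $3412$ and $1432$ respectively (note $M_{4,4}=M'_{4,4}=0$). Let $G(M)$ be the random growth diagram obtained from a uniformly random $(F,F',N)\in\Omega_M$, and similarly $G(M')$. Conditioned on $G(M)_{3,3}=(2)$, $G(M)_{3,4}=G(M)_{4,3}=(2,1)$, we have $G(M)_{4,4}=(2,2)$ with probability $1$; conditioned on $G(M')_{3,3}=(2)$, $G(M')_{3,4}=G(M')_{4,3}=(2,1)$, we have $G(M')_{4,4}=(3,1)$ with probability $1$. In particular, the distribution of the entry $(i,j)$ of the growth diagram is not determined by the entries at $(i-1,j-1),(i-1,j),(i,j-1)$ together with $M_{i,j}$.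
   Context: Permutation matrix of $w\in S_4$: $\mathring{w}_{a,b}=\delta_{a,w(b)}$. $\mathrm{Fl}_{(1,1,1,1)}$: complete flags $0=F_0\subset F_1\subset\cdots\subset F_4=\Bbbk^4$; $(F,F')$ has relative position $M$ if $\dim(F_i\cap F'_j)=\sum_{i'\le i,j'\le j}M_{i',j'}$. $N\in\mathfrak{gl}_4$ is strictly compatible with $F$ if $N(F_i)\subseteq F_{i-1}$. $\Omega_M$: set of triples $(F,F',N)$ of complete flags of relative position $M$ and $N$ strictly compatible with both. The growth diagram of $(F,F',N)$ is the $5\times5$ array of partitions $G_{i,j}=\mathrm{JF}(N|_{F_i\cap F'_j})$, $0\le i,j\le4$, where for nilpotent $N$, $\mathrm{JF}(N)$ is the partition with $\lambda_1+\cdots+\lambda_i=\dim\ker N^i$. *)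

(* Defs.v *)
From HB Require Import structures.
From mathcomp Require Import all_boot all_order all_algebra all_fingroup all_field.
Set Implicit Arguments. Unset Strict Implicit. Unset Printing Implicit Defensive.
Import GRing.Theory.
Local Open Scope ring_scope.

(* Vectors of k^4 are row vectors 'rV[F]_4; a subspace is represented by a
   square matrix (its row space, mxalgebra).  N acts on row vectors by v |-> v *m N. *)

(* Permutation matrix of w in S_4 given in one-line notation
   w = [:: w(1); w(2); w(3); w(4)] (values 1..4).  Entry (a,b) (0-indexed)
   is delta_{a+1, w(b+1)}, i.e. M_{a,b} = delta_{a,w(b)} in 1-indexed terms. *)
Definition perm_mx_nat (w : seq nat) (a b : 'I_4) : nat :=
  (a.+1 == nth 0 w b).

Definition complete_flag (F : fieldType) (Fl : 'I_5 -> 'M[F]_4) : Prop :=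
  (forall i : 'I_5, \rank (Fl i) = i) /\
  (forall i j : 'I_5, (i <= j)%N -> (Fl i <= Fl j)%MS).

Definition rel_pos (F : fieldType) (M : 'I_4 -> 'I_4 -> nat)
  (Fl Fl' : 'I_5 -> 'M[F]_4) : Prop :=
  forall i j : 'I_5,
    \rank (Fl i :&: Fl' j)%MS =
    (\sum_(a < 4 | (a < i)%N) \sum_(b < 4 | (b < j)%N) M a b)%N.

Definition strictly_compatible (F : fieldType) (N : 'M[F]_4)
  (Fl : 'I_5 -> 'M[F]_4) : Prop :=
  forall i : 'I_5, (0 < i)%N -> (Fl i *m N <= Fl (inord i.-1))%MS.

Definition Omega (F : fieldType) (M : 'I_4 -> 'I_4 -> nat)
  (Fl Fl' : 'I_5 -> 'M[F]_4) (N : 'M[F]_4) : Prop :=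
  [/\ complete_flag Fl, complete_flag Fl', rel_pos M Fl Fl',
      strictly_compatible N Fl & strictly_compatible N Fl'].

(* JF(N|_V) for an N-stable subspace V of k^4 (dim <= 4): the partition
   lambda with lambda_1 + ... + lambda_i = dim ker (N|_V)^i, recorded as
   [:: lambda_1; lambda_2; lambda_3; lambda_4] (padded by zeros; all parts
   beyond the 4th vanish since dim V <= 4).  ker (N|_V)^i = V cap ker N^i. *)
Definition JF (F : fieldType) (V N : 'M[F]_4) : seq nat :=
  [seq (\rank (V :&: kermx (N ^+ k.+1))%MS - \rank (V :&: kermx (N ^+ k))%MS)%N
  | k <- iota 0 4].

Definition growth (F : fieldType) (Fl Fl' : 'I_5 -> 'M[F]_4) (N : 'M[F]_4)
  (i j : nat) : seq nat :=
  JF (Fl (inord i) :&: Fl' (inord j))%MS N.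

Definition cond_event (F : fieldType) (Fl Fl' : 'I_5 -> 'M[F]_4) (N : 'M[F]_4)
  : Prop :=
  [/\ growth Fl Fl' N 3 3 = [:: 2; 0; 0; 0]%N,
      growth Fl Fl' N 3 4 = [:: 2; 1; 0; 0]%N &
      growth Fl Fl' N 4 3 = [:: 2; 1; 0; 0]%N].

(* Main.v *)
Require Import Defs.
From HB Require Import structures.
From mathcomp Require Import all_boot all_order all_algebra all_fingroup all_field.
From mathcomp Require Import zify.
Set Implicit Arguments. Unset Strict Implicit. Unset Printing Implicit Defensive.
Import GRing.Theory.
Local Open Scope ring_scope.

Section Gen.
Variable F : fieldType.
Implicit Types (V N : 'M[F]_4).

Lemma rkMS V N k : (\rank (V *m N ^+ k.+1) <= \rank (V *m N ^+ k))%N.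
Proof. by rewrite exprSr -mulmxE mulmxA mxrankM_maxl. Qed.

Lemma JF_eq V N : JF V N =
  [seq (\rank (V *m N ^+ k) - \rank (V *m N ^+ k.+1))%N | k <- iota 0 4].
Proof.
apply: eq_map => k.
have h1 := mxrank_mul_ker V (N ^+ k).
have h2 := mxrank_mul_ker V (N ^+ k.+1).
have h3 := rkMS V N k.
lia.
Qed.

Lemma JF_eq4 V N : JF V N =
  [:: \rank V - \rank (V *m N);
      \rank (V *m N) - \rank (V *m N ^+ 2);
      \rank (V *m N ^+ 2) - \rank (V *m N ^+ 3);
      \rank (V *m N ^+ 3) - \rank (V *m N ^+ 4)]%N.
Proof. by rewrite JF_eq /= expr0 expr1 mulmx1. Qed.


Lemma JF_eqmx V W N : (V :=: W)%MS -> JF V N = JF W N.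
Proof.
move=> eqVW; rewrite !JF_eq; apply: eq_map => k.
by rewrite (eqmxMr (N ^+ k) eqVW) (eqmxMr (N ^+ k.+1) eqVW).
Qed.

Lemma rk_inord (Fl : 'I_5 -> 'M[F]_4) k : complete_flag Fl -> (k < 5)%N ->
  \rank (Fl (inord k)) = k.
Proof. by case=> h _ hk; rewrite h inordK. Qed.

Lemma mxM2 V N : V *m N ^+ 2 = V *m N *m N.
Proof. by rewrite expr2 -mulmxE mulmxA. Qed.

Lemma setup (M : 'I_4 -> 'I_4 -> nat) Fl Fl' N :
  Omega M Fl Fl' N -> cond_event Fl Fl' N ->
  \rank (Fl (inord 3) :&: Fl' (inord 3))%MS = 2%N ->
  [/\ \rank (Fl (inord 3) *m N) = 1%N, Fl (inord 3) *m N *m N = 0,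
      \rank (Fl' (inord 3) *m N) = 1%N, Fl' (inord 3) *m N *m N = 0 &
      (Fl (inord 3) :&: Fl' (inord 3))%MS *m N = 0].
Proof.
case=> cf cf' rp sc sc' [g33 g34 g43] rW.
have r3 := rk_inord cf (isT : (3 < 5)%N).
have r3' := rk_inord cf' (isT : (3 < 5)%N).
have r4 := rk_inord cf (isT : (4 < 5)%N).
have r4' := rk_inord cf' (isT : (4 < 5)%N).
have e34 : (Fl (inord 3) :&: Fl' (inord 4) :=: Fl (inord 3))%MS.
  by apply/capmx_idPl; apply: submx_full; rewrite /row_full r4'.
have e43 : (Fl (inord 4) :&: Fl' (inord 3) :=: Fl' (inord 3))%MS.
  by apply/capmx_idPr; apply: submx_full; rewrite /row_full r4.
move: g34 g43 g33; rewrite /growth (JF_eqmx N e34) (JF_eqmx N e43) !JF_eq4.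
rewrite r3 r3' rW.
move=> [a1 a2 _ _] [b1 b2 _ _] [c1 _ _ _].
have la := mxrankM_maxl (Fl (inord 3)) N.
have lb := mxrankM_maxl (Fl' (inord 3)) N.
rewrite r3 in la; rewrite r3' in lb.
have ra : \rank (Fl (inord 3) *m N) = 1%N by lia.
have rb : \rank (Fl' (inord 3) *m N) = 1%N by lia.
split => //.
- by apply/eqP; rewrite -mxrank_eq0 -mxM2; apply/eqP; lia.
- by apply/eqP; rewrite -mxrank_eq0 -mxM2; apply/eqP; lia.
- by apply/eqP; rewrite -mxrank_eq0; apply/eqP; lia.
Qed.


Lemma final_shape (M : 'I_4 -> 'I_4 -> nat) Fl Fl' N :
  Omega M Fl Fl' N -> cond_event Fl Fl' N ->
  \rank (Fl (inord 3) :&: Fl' (inord 3))%MS = 2%N ->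
  [/\ (N <= Fl (inord 3) *m N + Fl' (inord 3) *m N)%MS,
      \rank (Fl (inord 3) *m N) = 1%N, \rank (Fl' (inord 3) *m N) = 1%N,
      (Fl (inord 3) :&: Fl' (inord 3))%MS *m N = 0 &
      growth Fl Fl' N 4 4 = [:: 4 - \rank N; \rank N; 0; 0]%N].
Proof.
move=> om ce rW; have [ra za rb zb zW] := setup om ce rW.
case: om => cf cf' rp sc sc'.
have r3 := rk_inord cf (isT : (3 < 5)%N).
have r3' := rk_inord cf' (isT : (3 < 5)%N).
have r4 := rk_inord cf (isT : (4 < 5)%N).
have r4' := rk_inord cf' (isT : (4 < 5)%N).
have full : row_full (Fl (inord 3) + Fl' (inord 3))%MS.
  have := mxrank_sum_cap (Fl (inord 3)) (Fl' (inord 3)).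
  rewrite r3 r3' rW /row_full => h; apply/eqP; lia.
have cov : forall C : 'M[F]_4, (C <= Fl (inord 3) *m C + Fl' (inord 3) *m C)%MS.
  move=> C; rewrite -{1}[C]mul1mx -addsmxMr; apply: submxMr.
  by rewrite sub1mx.
have N2 : N ^+ 2 = 0.
  apply/eqP; rewrite -submx0.
  by have := cov (N ^+ 2); rewrite !mxM2 za zb addsmx0.
have e44 : (Fl (inord 4) :&: Fl' (inord 4) :=: 1%:M)%MS.
  apply: eqmx_trans (_ : (Fl (inord 4) :=: 1%:M)%MS).
    by apply/capmx_idPl; apply: submx_full; rewrite /row_full r4'.
  by apply/eqmxP; rewrite submx1 sub1mx /row_full r4.
split => //.
rewrite /growth (JF_eqmx N e44) JF_eq4 !mul1mx mxrank1.
have N3 : N ^+ 3 = 0 by rewrite exprS N2 mulr0.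
have N4 : N ^+ 4 = 0 by rewrite exprS N3 mulr0.
by rewrite N2 N3 N4 mxrank0 subn0.
Qed.

Lemma partM Fl Fl' N :
  Omega (perm_mx_nat [:: 3; 4; 1; 2]%N) Fl Fl' N -> cond_event Fl Fl' N ->
  growth Fl Fl' N 4 4 = [:: 2; 2; 0; 0]%N.
Proof.
move=> om ce.
have rp := om; case: rp => cf cf' rp sc sc'.
have rW : \rank (Fl (inord 3) :&: Fl' (inord 3))%MS = 2%N.
  by rewrite rp inordK // /perm_mx_nat; do 8 (rewrite ?big_mkcond ?big_ord_recr ?big_ord0 /=).
have r22 : \rank (Fl (inord 2) :&: Fl' (inord 2))%MS = 0%N.
  by rewrite rp inordK // /perm_mx_nat; do 8 (rewrite ?big_mkcond ?big_ord_recr ?big_ord0 /=).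
have [cov ra rb _ ->] := final_shape om ce rW.
suff -> : \rank N = 2%N by [].
have s1 : (Fl (inord 3) *m N <= Fl (inord 2))%MS.
  by have := sc (inord 3); rewrite inordK //= => /(_ isT).
have s2 : (Fl' (inord 3) *m N <= Fl' (inord 2))%MS.
  by have := sc' (inord 3); rewrite inordK //= => /(_ isT).
have cap0 : \rank (Fl (inord 3) *m N :&: Fl' (inord 3) *m N)%MS = 0%N.
  have := mxrankS (capmxS s1 s2); rewrite r22; lia.
have h1 := mxrank_sum_cap (Fl (inord 3) *m N) (Fl' (inord 3) *m N).
have h2 : (Fl (inord 3) *m N + Fl' (inord 3) *m N <= N)%MS.
  by rewrite addsmx_sub !submxMl.
have h3 := mxrankS h2. have h4 := mxrankS cov.
lia.
Qed.


Lemma intoL (A3 A2 B3 L W N : 'M[F]_4) :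
  \rank A3 = 3%N -> \rank (A3 *m N) = 1%N -> A3 *m N *m N = 0 ->
  (W <= A3)%MS -> (W <= B3)%MS -> W *m N = 0 -> \rank W = 2%N ->
  (A3 *m N <= A2)%MS -> (A2 <= A3)%MS -> (L <= A2 :&: B3)%MS -> \rank L = 1%N ->
  \rank (A2 :&: B3)%MS = 1%N -> (A3 *m N <= L)%MS.
Proof.
move=> rA rAN zAN sWA sWB zW rW sAN sA2 sL rL rc.
set K := (A3 :&: kermx N)%MS.
have rK : \rank K = 2%N by have := mxrank_mul_ker A3 N; rewrite rA rAN /K; lia.
have sWK : (W <= K)%MS by rewrite sub_capmx sWA sub_kermx zW eqxx.
have sKW : (K <= W)%MS by rewrite -(mxrank_leqif_sup sWK).2 rW rK.
have sNK : (A3 *m N <= K)%MS.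
  by rewrite sub_capmx (submx_trans sAN sA2) sub_kermx zAN eqxx.
have sNB : (A3 *m N <= A2 :&: B3)%MS.
  by rewrite sub_capmx sAN (submx_trans sNK (submx_trans sKW sWB)).
have sCL : (A2 :&: B3 <= L)%MS by rewrite -(mxrank_leqif_sup sL).2 rL rc.
exact: submx_trans sNB sCL.
Qed.

Lemma partM' Fl Fl' N :
  Omega (perm_mx_nat [:: 1; 4; 3; 2]%N) Fl Fl' N -> cond_event Fl Fl' N ->
  growth Fl Fl' N 4 4 = [:: 3; 1; 0; 0]%N.
Proof.
move=> om ce.
have rp := om; case: rp => cf cf' rp sc sc'.
have rW : \rank (Fl (inord 3) :&: Fl' (inord 3))%MS = 2%N.
  by rewrite rp inordK // /perm_mx_nat; do 8 (rewrite ?big_mkcond ?big_ord_recr ?big_ord0 /=).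
have r11 : \rank (Fl (inord 1) :&: Fl' (inord 1))%MS = 1%N.
  by rewrite rp inordK // /perm_mx_nat; do 8 (rewrite ?big_mkcond ?big_ord_recr ?big_ord0 /=).
have r23 : \rank (Fl (inord 2) :&: Fl' (inord 3))%MS = 1%N.
  by rewrite rp !inordK // /perm_mx_nat; do 8 (rewrite ?big_mkcond ?big_ord_recr ?big_ord0 /=).
have r32 : \rank (Fl (inord 3) :&: Fl' (inord 2))%MS = 1%N.
  by rewrite rp !inordK // /perm_mx_nat; do 8 (rewrite ?big_mkcond ?big_ord_recr ?big_ord0 /=).
have [cov ra rb zW ->] := final_shape om ce rW.
have [_ za _ zb _] := setup om ce rW.
suff -> : \rank N = 1%N by [].
have r3 := rk_inord cf (isT : (3 < 5)%N).
have r3' := rk_inord cf' (isT : (3 < 5)%N).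
have s1 : (Fl (inord 3) *m N <= Fl (inord 2))%MS.
  by have := sc (inord 3); rewrite inordK //= => /(_ isT).
have s2 : (Fl' (inord 3) *m N <= Fl' (inord 2))%MS.
  by have := sc' (inord 3); rewrite inordK //= => /(_ isT).
have fl (G : 'I_5 -> 'M[F]_4) i j : complete_flag G -> (i <= j < 5)%N ->
    (G (inord i) <= G (inord j))%MS.
  by case=> _ h /andP[hij hj]; apply: h; rewrite !inordK //; lia.
set L := (Fl (inord 1) :&: Fl' (inord 1))%MS.
have t1 : (Fl (inord 3) *m N <= L)%MS.
  apply: (intoL r3 ra za (capmxSl _ _) (capmxSr _ _) zW rW s1 (fl _ 2 3 cf isT)) => //.
  by apply: capmxS; apply: fl.
have t2 : (Fl' (inord 3) *m N <= L)%MS.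
  apply: (intoL r3' rb zb (capmxSr _ _) (capmxSl _ _) zW rW s2 (fl _ 2 3 cf' isT)) => //.
    by rewrite capmxC; apply: capmxS; apply: fl.
  by rewrite capmxC.
have h1 : (N <= L)%MS by apply: submx_trans cov _; rewrite addsmx_sub t1 t2.
have h2 := mxrankS h1; rewrite /L r11 in h2.
have h3 := mxrankS (submxMl (Fl (inord 3)) N).
lia.
Qed.

Definition cs (P : pred 'I_4) : 'M[F]_4 := \matrix_(i, j) ((i == j) && P i)%:R.

Lemma cs_ext (P Q : pred 'I_4) : P =1 Q -> cs P = cs Q.
Proof. by move=> h; apply/matrixP=> i j; rewrite !mxE h. Qed.

Lemma csMl (P : pred 'I_4) (A : 'M[F]_4) :
  cs P *m A = \matrix_(i, j) ((P i)%:R * A i j).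
Proof.
apply/matrixP=> i j; rewrite !mxE (bigD1 i) //= big1 ?addr0.
  by rewrite !mxE eqxx.
by move=> k nki; rewrite !mxE eq_sym (negbTE nki) mul0r.
Qed.

Lemma csMr (P : pred 'I_4) (A : 'M[F]_4) :
  A *m cs P = \matrix_(i, j) (A i j * (P j)%:R).
Proof.
apply/matrixP=> i j; rewrite !mxE (bigD1 j) //= big1 ?addr0.
  by rewrite !mxE eqxx.
by move=> k nkj; rewrite !mxE (negbTE nkj) mulr0.
Qed.

Lemma cs_mul (P Q : pred 'I_4) : cs P *m cs Q = cs (predI P Q).
Proof.
rewrite csMl; apply/matrixP=> i j; rewrite !mxE -natrM; congr (_ %:R).
by rewrite mulnb /=; case: (P i); case: (i == j); case: (Q i).
Qed.

Lemma cs0 : cs pred0 = 0.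
Proof. by apply/matrixP=> i j; rewrite !mxE andbF. Qed.

Lemma cs_idem (A : 'M[F]_4) P : (A <= cs P)%MS -> A *m cs P = A.
Proof.
case/submxP=> D ->; rewrite -mulmxA cs_mul; congr (_ *m _).
by apply: cs_ext => i /=; rewrite andbb.
Qed.

Lemma cs_sub (P Q : pred 'I_4) : (forall i, P i -> Q i) -> (cs P <= cs Q)%MS.
Proof.
move=> h; have -> : cs P = cs P *m cs Q.
  by rewrite cs_mul; apply: cs_ext => i /=; case hP: (P i) => //=; rewrite h.
exact: submxMl.
Qed.

Lemma cs_cap P Q : (cs P :&: cs Q :=: cs (predI P Q))%MS.
Proof.
apply/eqmxP/andP; split.
  rewrite -cs_mul -(cs_idem (capmxSr (cs P) (cs Q))).
  rewrite -{1}(cs_idem (capmxSl (cs P) (cs Q))) -mulmxA; exact: submxMl.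
by rewrite sub_capmx !cs_sub // => i /andP[].
Qed.

Lemma rank_U (P Q : pred 'I_4) : (forall i, P i && Q i = false) ->
  \rank (cs (predU P Q)) = (\rank (cs P) + \rank (cs Q))%N.
Proof.
move=> dj.
have e1 : cs (predU P Q) = cs P + cs Q.
  apply/matrixP=> i j; rewrite !mxE -natrD; congr (_ %:R).
  by have := dj i; rewrite /=; case: (P i); case: (Q i); case: (i == j).
have e2 : ((cs P + cs Q)%R :=: (cs P + cs Q)%MS)%MS.
  apply/eqmxP/andP; split; first by apply: addmx_sub_adds.
  rewrite addsmx_sub; apply/andP; split.
    rewrite [X in (X <= _)%MS](_ : cs P = cs P *m (cs P + cs Q)) ?submxMl //.
    rewrite mulmxDr !cs_mul (cs_ext (P := predI P Q) (Q := pred0)) ?cs0 ?addr0.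
      by apply: cs_ext => i /=; rewrite andbb.
    by move=> i /=; rewrite dj.
  rewrite [X in (X <= _)%MS](_ : cs Q = cs Q *m (cs P + cs Q)) ?submxMl //.
  rewrite mulmxDr !cs_mul (cs_ext (P := predI Q P) (Q := pred0)) ?cs0 ?add0r.
    by apply: cs_ext => i /=; rewrite andbb.
  by move=> i /=; rewrite andbC dj.
have e3 : (cs P :&: cs Q)%MS = 0.
  set C := (cs P :&: cs Q)%MS.
  have h1 : C = C *m cs Q := esym (cs_idem (capmxSr _ _)).
  have h2 : C = C *m cs P := esym (cs_idem (capmxSl _ _)).
  rewrite h1 h2 -mulmxA cs_mul.
  by rewrite (cs_ext (Q := pred0)) ?cs0 ?mulmx0 // => i /=; rewrite dj.
have := mxrank_sum_cap (cs P) (cs Q).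
by rewrite e3 mxrank0 addn0 -e2 -e1.
Qed.

Lemma rank_single (P : pred 'I_4) x :
  \rank (cs (fun i => P i && (i == x))) = P x.
Proof.
case hx: (P x).
  rewrite (_ : cs _ = delta_mx x x) ?mxrank_delta //.
  apply/matrixP=> i j; rewrite !mxE; congr (_ %:R).
  by case: (i =P x) => [->|_]; rewrite ?hx ?andbF ?andbT //= eq_sym.
rewrite (_ : cs _ = 0) ?mxrank0 //.
apply/matrixP=> i j; rewrite !mxE.
by case: (i =P x) => [->|_]; rewrite ?hx ?andbF ?andbT.
Qed.

Lemma rank_seq (P : pred 'I_4) (s : seq 'I_4) : uniq s ->
  \rank (cs (fun i => P i && (i \in s))) = (\sum_(i <- s) P i)%N.
Proof.
elim: s => [|x s IH] /=.
  by move=> _; rewrite big_nil (cs_ext (Q := pred0)) ?cs0 ?mxrank0 // => i; rewrite andbF.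
case/andP=> xs us; rewrite big_cons -IH // -rank_single -rank_U.
  by congr (\rank _); apply: cs_ext => i /=; rewrite in_cons andb_orr.
move=> i /=; case: (i =P x) => [->|]; rewrite ?andbF //.
by rewrite (negbTE xs) !andbF.
Qed.

Lemma cs_rank (P : pred 'I_4) : \rank (cs P) = (\sum_(i < 4) P i)%N.
Proof.
rewrite -rank_seq ?index_enum_uniq //; congr (\rank _).
by apply: cs_ext => i; rewrite mem_index_enum andbT.
Qed.

Definition flg (s : seq nat) (i : 'I_5) : 'M[F]_4 :=
  cs (fun k : 'I_4 => (index (k : nat) s < i)%N).
Definition mxb (f : 'I_4 -> 'I_4 -> bool) : 'M[F]_4 := \matrix_(i, j) (f i j)%:R.

Lemma flg_inord s n : (n < 5)%N ->
  flg s (inord n) = cs (fun k : 'I_4 => (index (k : nat) s < n)%N).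
Proof. by move=> hn; rewrite /flg inordK. Qed.

Lemma flag_ok s : (forall i : 'I_5, (\sum_(k < 4) (index (k : nat) s < i) = i)%N) ->
  complete_flag (flg s).
Proof.
move=> h; split; first by move=> i; rewrite cs_rank h.
by move=> i j hij; apply: cs_sub => k hk; exact: leq_trans hk hij.
Qed.

Lemma rel_ok s t (M : 'I_4 -> 'I_4 -> nat) :
  (forall i j : 'I_5, (\sum_(k < 4) ((index (k : nat) s < i) && (index (k : nat) t < j))
     = \sum_(a < 4 | a < i) \sum_(b < 4 | b < j) M a b)%N) ->
  rel_pos M (flg s) (flg t).
Proof. by move=> h i j; rewrite cs_cap cs_rank h. Qed.

Lemma csM_mxb (P : pred 'I_4) (f : 'I_4 -> 'I_4 -> bool) : cs P *m mxb f = mxb (fun i j => P i && f i j).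
Proof.
by rewrite csMl; apply/matrixP=> i j; rewrite !mxE -natrM mulnb.
Qed.

Lemma comp_ok s (f : 'I_4 -> 'I_4 -> bool) :
  (forall (i : 'I_5) (a b : 'I_4), (0 < i)%N -> (index (a : nat) s < i)%N -> f a b ->
     (index (b : nat) s < i.-1)%N) ->
  strictly_compatible (mxb f) (flg s).
Proof.
move=> h i hi; rewrite flg_inord; last by rewrite (leq_ltn_trans (leq_pred i)).
set Q := (fun k : 'I_4 => _).
rewrite (_ : flg s i *m mxb f = flg s i *m mxb f *m cs Q) ?submxMl //.
rewrite /flg !csM_mxb csMr; apply/matrixP=> a b; rewrite !mxE -natrM mulnb.
congr (_ %:R); case h1: (index _ s < i)%N => //=; case h2: (f a b) => //=.
by rewrite /Q (h i a b hi h1 h2).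
Qed.

Lemma sq0 (f : 'I_4 -> 'I_4 -> bool) : (forall a b c, f a b -> f b c -> False) -> mxb f ^+ 2 = 0.
Proof.
move=> h; rewrite expr2 -mulmxE; apply/matrixP=> i j; rewrite !mxE.
apply: big1 => k _; rewrite !mxE -natrM mulnb.
have -> : f i k && f k j = false.
  by apply/negbTE/negP => /andP[h1 h2]; exact: h _ _ _ h1 h2.
by [].
Qed.

Lemma JF_cs R (f : 'I_4 -> 'I_4 -> bool) : mxb f ^+ 2 = 0 ->
  JF (cs R) (mxb f) =
  [:: \rank (cs R) - \rank (cs R *m mxb f); \rank (cs R *m mxb f); 0; 0]%N.
Proof.
move=> N2; rewrite JF_eq4.
have N3 : mxb f ^+ 3 = 0 by rewrite exprS N2 mulr0.
have N4 : mxb f ^+ 4 = 0 by rewrite exprS N3 mulr0.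
by rewrite N2 N3 N4 !mulmx0 mxrank0 subn0.
Qed.

Lemma mxb_delta (g : 'I_4 -> 'I_4 -> bool) a b : (forall i j, g i j = (i == a) && (j == b)) ->
  mxb g = delta_mx a b.
Proof. by move=> h; apply/matrixP=> i j; rewrite !mxE h. Qed.

Lemma mxb0 (g : 'I_4 -> 'I_4 -> bool) : (forall i j, g i j = false) -> mxb g = 0.
Proof. by move=> h; apply/matrixP=> i j; rewrite !mxE h. Qed.

Lemma growth_cs s t (f : 'I_4 -> 'I_4 -> bool) a b : mxb f ^+ 2 = 0 -> (a < 5)%N -> (b < 5)%N ->
  growth (flg s) (flg t) (mxb f) a b =
  let R := fun k : 'I_4 => (index (k : nat) s < a)%N && (index (k : nat) t < b)%N in
  [:: (\sum_(k < 4) R k) - \rank (mxb (fun i j => R i && f i j));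
      \rank (mxb (fun i j => R i && f i j)); 0; 0]%N.
Proof.
move=> N2 ha hb; rewrite /growth !flg_inord // (JF_eqmx _ (cs_cap _ _)).
by rewrite JF_cs // cs_rank csM_mxb.
Qed.

Ltac bigc := do 8 (rewrite ?big_mkcond ?big_ord_recr ?big_ord0 /=).

Definition fM (i j : 'I_4) : bool :=
  ((i == 1 :> nat) && (j == 0 :> nat)) || ((i == 3 :> nat) && (j == 2 :> nat)).

Lemma existM : exists (Fl Fl' : 'I_5 -> 'M[F]_4) (N : 'M[F]_4),
  Omega (perm_mx_nat [:: 3; 4; 1; 2]%N) Fl Fl' N /\ cond_event Fl Fl' N.
Proof.
have N2 : mxb fM ^+ 2 = 0.
  by apply: sq0 => -[[|[|[|[|//]]]] ?] [[|[|[|[|//]]]] ?] [[|[|[|[|//]]]] ?].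
exists (flg [:: 0; 1; 2; 3]%N), (flg [:: 2; 3; 0; 1]%N), (mxb fM); split.
  split.
  - by apply: flag_ok => -[[|[|[|[|[|//]]]]] ?]; bigc.
  - by apply: flag_ok => -[[|[|[|[|[|//]]]]] ?]; bigc.
  - by apply: rel_ok => -[[|[|[|[|[|//]]]]] ?] -[[|[|[|[|[|//]]]]] ?];
    rewrite /perm_mx_nat; bigc.
  - by apply: comp_ok => -[[|[|[|[|[|//]]]]] ?] -[[|[|[|[|//]]]] ?] -[[|[|[|[|//]]]] ?].
  - by apply: comp_ok => -[[|[|[|[|[|//]]]]] ?] -[[|[|[|[|//]]]] ?] -[[|[|[|[|//]]]] ?].
split; rewrite growth_cs //=.
- rewrite (mxb0 (g := fun i j => _)) ?mxrank0; first by bigc.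
  by move=> -[[|[|[|[|//]]]] ?] -[[|[|[|[|//]]]] ?].
- rewrite (@mxb_delta _ (Ordinal (isT : (1 < 4)%N)) (Ordinal (isT : (0 < 4)%N))) ?mxrank_delta; first by bigc.
  by move=> -[[|[|[|[|//]]]] ?] -[[|[|[|[|//]]]] ?].
- rewrite (@mxb_delta _ (Ordinal (isT : (3 < 4)%N)) (Ordinal (isT : (2 < 4)%N))) ?mxrank_delta; first by bigc.
  by move=> -[[|[|[|[|//]]]] ?] -[[|[|[|[|//]]]] ?].
Qed.

Definition fM' (i j : 'I_4) : bool :=
  ((i == 1 :> nat) && (j == 0 :> nat)) || ((i == 3 :> nat) && (j == 0 :> nat)).

Lemma existM' : exists (Fl Fl' : 'I_5 -> 'M[F]_4) (N : 'M[F]_4),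
  Omega (perm_mx_nat [:: 1; 4; 3; 2]%N) Fl Fl' N /\ cond_event Fl Fl' N.
Proof.
have N2 : mxb fM' ^+ 2 = 0.
  by apply: sq0 => -[[|[|[|[|//]]]] ?] [[|[|[|[|//]]]] ?] [[|[|[|[|//]]]] ?].
exists (flg [:: 0; 1; 2; 3]%N), (flg [:: 0; 3; 2; 1]%N), (mxb fM'); split.
  split.
  - by apply: flag_ok => -[[|[|[|[|[|//]]]]] ?]; bigc.
  - by apply: flag_ok => -[[|[|[|[|[|//]]]]] ?]; bigc.
  - by apply: rel_ok => -[[|[|[|[|[|//]]]]] ?] -[[|[|[|[|[|//]]]]] ?];
    rewrite /perm_mx_nat; bigc.
  - by apply: comp_ok => -[[|[|[|[|[|//]]]]] ?] -[[|[|[|[|//]]]] ?] -[[|[|[|[|//]]]] ?].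
  - by apply: comp_ok => -[[|[|[|[|[|//]]]]] ?] -[[|[|[|[|//]]]] ?] -[[|[|[|[|//]]]] ?].
split; rewrite growth_cs //=.
- rewrite (mxb0 (g := fun i j => _)) ?mxrank0; first by bigc.
  by move=> -[[|[|[|[|//]]]] ?] -[[|[|[|[|//]]]] ?].
- rewrite (@mxb_delta _ (Ordinal (isT : (1 < 4)%N)) (Ordinal (isT : (0 < 4)%N))) ?mxrank_delta; first by bigc.
  by move=> -[[|[|[|[|//]]]] ?] -[[|[|[|[|//]]]] ?].
- rewrite (@mxb_delta _ (Ordinal (isT : (3 < 4)%N)) (Ordinal (isT : (0 < 4)%N))) ?mxrank_delta; first by bigc.
  by move=> -[[|[|[|[|//]]]] ?] -[[|[|[|[|//]]]] ?].
Qed.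
End Gen.
Local Close Scope ring_scope.

Theorem proposition7p23 (F : finFieldType) :
  (* M = permutation matrix of 3412 *)
  ((exists (Fl Fl' : 'I_5 -> 'M[F]_4) (N : 'M[F]_4),
       Omega (perm_mx_nat [:: 3; 4; 1; 2]%N) Fl Fl' N /\ cond_event Fl Fl' N) /\
   (forall (Fl Fl' : 'I_5 -> 'M[F]_4) (N : 'M[F]_4),
       Omega (perm_mx_nat [:: 3; 4; 1; 2]%N) Fl Fl' N -> cond_event Fl Fl' N ->
       growth Fl Fl' N 4 4 = [:: 2; 2; 0; 0]%N)) /\
  (* M' = permutation matrix of 1432 *)
  ((exists (Fl Fl' : 'I_5 -> 'M[F]_4) (N : 'M[F]_4),
       Omega (perm_mx_nat [:: 1; 4; 3; 2]%N) Fl Fl' N /\ cond_event Fl Fl' N) /\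
   (forall (Fl Fl' : 'I_5 -> 'M[F]_4) (N : 'M[F]_4),
       Omega (perm_mx_nat [:: 1; 4; 3; 2]%N) Fl Fl' N -> cond_event Fl Fl' N ->
       growth Fl Fl' N 4 4 = [:: 3; 1; 0; 0]%N)).
Proof.
split; split.
- exact: existM.
- exact: partM.
- exact: existM'.
- exact: partM'.
Qed.
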